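(* Let $\alpha>0$, $\beta_m>\alpha$, $\tau=1/(\beta_m-\alpha)$ and $$\beta(t)=\alpha+\frac{2t/\tau^2}{1+t^2/\tau^2}.$$ Let $S_0>0$, $I_0>0$ and let $(S(t),I(t),R(t))$ be the solution of $$\dot S=-\frac{\beta(t)SI}{S+I},\qquad \dot I=\frac{\beta(t)SI}{S+I}-\alpha I,\qquad \dot R=\alpha I$$ with $S(0)=S_0$, $I(0)=I_0$. Writing $k=\sqrt{\frac{I_0}{S_0+I_0}}$, for $t\ge 0$, $$S(t)=S_0\left(\frac{S_0+I_0}{S_0+I_0(1+t^2/\tau^2)}\right)\exp\left[\alpha\,\frac{S_0}{S_0+I_0}\,\frac{\arctan(k\,t/\tau)}{k/\tau}\right]e^{-\alpha t},$$ $$I(t)=I_0\left(1+\frac{t^2}{\tau^2}\right)\left(\frac{S_0+I_0}{S_0+I_0(1+t^2/\tau^2)}\right)\exp\left[\alpha\,\frac{S_0}{S_0+I_0}\,\frac{\arctan(k\,t/\tau)}{k/\tau}\right]e^{-\alpha t}.$$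
   Context: Modified SIR epidemiological model with constant recovery rate $\alpha$ and time-dependent transmission rate $\beta(t)$, here having its maximum value $\beta_m$ at $t=\tau$. *)

(* Defs.v *)
From Stdlib Require Import Reals Lra.
From Coquelicot Require Import Coquelicot.
Open Scope R_scope.

Definition tau (alpha beta_m : R) : R := 1 / (beta_m - alpha).

Definition beta (alpha beta_m t : R) : R :=
  alpha + (2 * t / (tau alpha beta_m) ^ 2) / (1 + t ^ 2 / (tau alpha beta_m) ^ 2).

(* Main.v *)
From Stdlib Require Import Reals Lra Classical.
From Coquelicot Require Import Coquelicot.
Require Import Defs.
Open Scope R_scope.

Lemma const_on (f : R->R) a b : a <= b -> (forall x, a<=x<=b -> is_derive f x 0) -> f b = f a.
Proof.
intros Hab H. destruct (MVT_gen f a b (fun _ => 0)) as [c [_ Hc]].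
- intros x Hx. apply H. rewrite Rmin_left, Rmax_right in Hx by lra; lra.
- intros x Hx. apply continuity_pt_filterlim. apply (ex_derive_continuous (K:=R_AbsRing) (V:=R_NormedModule) f x). eexists. apply H.
  rewrite Rmin_left, Rmax_right in Hx by lra; lra.
- lra.
Qed.

Lemma left_zero (h : R->R) T : 0 < T -> continuity_pt h T -> (forall x, 0<=x<T -> h x = 0) -> h T = 0.
Proof.
intros HT Hc Hz. destruct (Req_dec (h T) 0) as [|Hn]; auto. exfalso.
unfold continuity_pt, continue_in, limit1_in, limit_in in Hc.
destruct (Hc (Rabs (h T))) as [d [Hd Hx]]. apply Rabs_pos_lt; auto.
set (x := T - Rmin d T / 2).
assert (Hm: 0 < Rmin d T) by (apply Rmin_pos; lra).
assert (Hm2: Rmin d T <= d) by apply Rmin_l.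
assert (Hm3: Rmin d T <= T) by apply Rmin_r.
specialize (Hx x). rewrite (Hz x) in Hx by (unfold x; lra).
simpl in Hx. unfold R_dist in Hx. rewrite Rminus_0_l, Rabs_Ropp in Hx.
assert (Rabs (h T) < Rabs (h T)); [|lra]. apply Hx. split.
- split; [exact I| unfold x; lra].
- unfold x. rewrite Rabs_left by lra. lra.
Qed.

Lemma pos_near (f : R -> R) x : continuity_pt f x -> 0 < f x ->
  exists d, 0 < d /\ forall y, Rabs (y - x) < d -> 0 < f y.
Proof.
intros Hc Hp.
unfold continuity_pt, continue_in, limit1_in, limit_in in Hc.
destruct (Hc (f x / 2)) as [d [Hd Hx]]. lra.
exists d. split; auto. intros y Hy.
destruct (Req_dec y x) as [->|Hne]; auto.
assert (H: R_dist (f y) (f x) < f x / 2).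
{ apply Hx. split; [split; [exact I| auto]| exact Hy]. }
unfold R_dist in H. apply Rabs_def2 in H. lra.
Qed.

Theorem mainTheorem6 (alpha beta_m S0 I0 : R) (S I Rc : R -> R) :
  0 < alpha -> alpha < beta_m -> 0 < S0 -> 0 < I0 ->
  S 0 = S0 -> I 0 = I0 ->
  (forall t, 0 <= t ->
     is_derive S t (- (beta alpha beta_m t * S t * I t / (S t + I t))) /\
     is_derive I t (beta alpha beta_m t * S t * I t / (S t + I t) - alpha * I t) /\
     is_derive Rc t (alpha * I t)) ->
  forall t, 0 <= t ->
    let ta := tau alpha beta_m in
    let k := sqrt (I0 / (S0 + I0)) in
    let E := exp (alpha * (S0 / (S0 + I0)) * (atan (k * t / ta) / (k / ta))) * exp (- alpha * t) in
    S t = S0 * ((S0 + I0) / (S0 + I0 * (1 + t ^ 2 / ta ^ 2))) * E /\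
    I t = I0 * (1 + t ^ 2 / ta ^ 2) * ((S0 + I0) / (S0 + I0 * (1 + t ^ 2 / ta ^ 2))) * E.
Proof.
intros ha hb hS0 hI0 eS eI HD t ht ta k E.
assert (hta: 0 < ta) by (unfold ta, tau; apply Rdiv_lt_0_compat; lra).
assert (hk: 0 < k) by (apply sqrt_lt_R0; apply Rdiv_lt_0_compat; lra).
assert (hk2: k*k = I0/(S0+I0)) by (apply sqrt_sqrt; left; apply Rdiv_lt_0_compat; lra).
assert (hbeta: forall s, beta alpha beta_m s = alpha + (2*s/ta^2)/(1 + s^2/ta^2)) by reflexivity.
assert (hg: forall s, 1 <= 1 + s^2/ta^2).
{ intros s. assert (0 <= s^2/ta^2); [|lra]. unfold Rdiv.
  apply Rmult_le_pos; [apply pow2_ge_0| left; apply Rinv_0_lt_compat, pow_lt, hta]. }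
set (P := fun s => (S0 + I0 * (1 + s^2/ta^2))/(S0+I0) * exp(- (alpha*(S0/(S0+I0))*(atan(k*s/ta)/(k/ta)))) * exp(alpha*s)).
assert (hP: forall s, 0 < P s).
{ intros s. unfold P. specialize (hg s).
  repeat apply Rmult_lt_0_compat; try apply exp_pos.
  nra. apply Rinv_0_lt_compat; lra. }
set (good := fun s => forall x, 0<=x<=s -> 0 < S x /\ 0 < I x).
assert (A1: forall s, 0 <= s -> good s -> I s = I0/S0 * (1 + s^2/ta^2) * S s).
{ intros s hs hgood.
  pose (phi := fun y => I y / ((1 + y^2/ta^2) * S y)).
  assert (H1: phi s = phi 0).
  { apply const_on; auto. unfold phi. intros x hx. destruct (HD x (proj1 hx)) as [dS [dI _]].
    destruct (hgood x hx) as [px qx]. specialize (hg x).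
    auto_derive.
    - repeat split; try (eexists; eauto).
      replace (1 + x*(x*1)*/(ta*(ta*1))) with (1 + x^2/ta^2) by (simpl; field; lra).
      assert (0 < (1 + x^2/ta^2) * S x) by (apply Rmult_lt_0_compat; lra); lra.
    - change (Derive (fun x0 : R => I x0) x) with (Derive I x).
      change (Derive (fun x0 : R => S x0) x) with (Derive S x).
      rewrite (is_derive_unique _ _ _ dS), (is_derive_unique _ _ _ dI), hbeta.
      replace (1 + x*(x*1)*/(ta*(ta*1))) with (1 + x^2/ta^2) by (simpl; field; lra).
      assert (ta^2 + x^2 > 0) by (assert (0 < ta^2) by (apply pow_lt; lra); nra).
      field; repeat split; lra. }
  unfold phi in H1. rewrite eS, eI in H1.
  replace ((1 + 0^2/ta^2) * S0) with S0 in H1 by (simpl; field; lra).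
  specialize (hgood s (conj hs (Rle_refl s))). specialize (hg s).
  apply (f_equal (fun z => z * ((1 + s ^ 2 / ta ^ 2) * S s))) in H1.
  replace (I0/S0 * (1+s^2/ta^2) * S s) with (I0/S0 * ((1+s^2/ta^2)*S s)) by ring.
  assert (ta^2+s^2>0) by (assert (0<ta^2) by (apply pow_lt; lra); nra).
  rewrite <- H1. field; repeat split; lra. }
assert (hP0: P 0 = 1).
{ unfold P. replace (k*0/ta) with 0 by (field; lra). rewrite atan_0.
  replace (alpha * (S0/(S0+I0)) * (0/(k/ta))) with 0 by (field; lra).
  rewrite Ropp_0, exp_0, Rmult_0_r, exp_0. simpl. field. lra. }
assert (A2: forall s, 0 <= s -> good s -> S s * P s = S0).
{ intros s hs hgood.
  pose (phi := fun y => S y * P y).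
  assert (H1: phi s = phi 0).
  { apply const_on; auto. unfold phi, P. intros x hx. destruct (HD x (proj1 hx)) as [dS [dI _]].
    destruct (hgood x hx) as [px qx]. specialize (hg x).
    assert (hIx: I x = I0/S0 * (1 + x^2/ta^2) * S x).
    { apply A1; [lra|]. intros y hy. apply hgood; lra. }
    auto_derive.
    - eexists; eauto.
    - change (Derive (fun x0 : R => S x0) x) with (Derive S x).
      rewrite (is_derive_unique _ _ _ dS), hbeta, hIx.
      replace (1 + k * x * / ta * (k * x * / ta * 1)) with ((S0 + I0 * (1 + x^2/ta^2))/(S0+I0)).
      2:{ replace (k * x * / ta * (k * x * / ta * 1)) with (k*k * (x^2/ta^2)) by (simpl; field; lra).
          rewrite hk2. field. lra. }
      replace (1 + x*(x*1)*/(ta*(ta*1))) with (1 + x^2/ta^2) by (simpl; field; lra).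
      assert (ta^2 + x^2 > 0) by (assert (0 < ta^2) by (apply pow_lt; lra); nra).
      assert (h2: 0 < ta^2) by (apply pow_lt; lra).
      assert (h3: 0 < S0*ta^2 + I0*(ta^2+x^2)) by (assert (0 < S0*ta^2) by (apply Rmult_lt_0_compat; lra); assert (0 < I0*(ta^2+x^2)) by (apply Rmult_lt_0_compat; lra); lra).
      assert (h4: 0 < S x * (S0*ta^2 + I0*(ta^2+x^2))) by (apply Rmult_lt_0_compat; lra).
      field. repeat split; lra. }
  unfold phi in H1. rewrite eS, hP0 in H1. lra. }
assert (B: forall t0, 0 <= t0 -> good t0).
{ intros t0 ht0. destruct (classic (good t0)) as [|Hn]; auto. exfalso.
  set (Es := fun s => 0 <= s <= t0 /\ good s).
  assert (Eg0: good 0). { intros x hx. replace x with 0 by lra. rewrite eS, eI; lra. }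
  destruct (completeness Es) as [T [HT1 HT2]].
  { exists t0. intros s [hs _]. lra. }
  { exists 0. split; [lra| exact Eg0]. }
  assert (T0: 0 <= T) by (apply HT1; split; [lra|exact Eg0]).
  assert (Tt: T <= t0) by (apply HT2; intros s [hs _]; lra).
  assert (Hbelow: forall s, 0 <= s < T -> good s).
  { intros s hs. destruct (classic (exists e, Es e /\ s <= e)) as [[e [[_ ge] hse]]|Hne].
    - intros x hx. apply ge; lra.
    - exfalso. assert (T <= s); [|lra]. apply HT2. intros e He.
      destruct (Rle_lt_dec s e) as [h|h]; [exfalso; apply Hne; exists e; auto| lra]. }
  destruct (HD T T0) as [dS [dI _]].
  assert (HTv: I T = I0/S0 * (1 + T^2/ta^2) * S T /\ S T * P T = S0).
  { destruct (Req_dec T 0) as [->|HT0].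
    - split; [apply A1|apply A2]; auto; lra.
    - split.
      + assert (h: (fun y => I y - I0/S0*(1+y^2/ta^2)*S y) T = 0).
        { assert (Tp: 0 < T) by (destruct (Rle_lt_or_eq_dec 0 T T0) as [Tp|Te]; [exact Tp| congruence]). refine (left_zero (fun y => I y - I0/S0*(1+y^2/ta^2)*S y) T Tp _ _).
          - apply continuity_pt_filterlim. apply (ex_derive_continuous (K:=R_AbsRing) (V:=R_NormedModule) (fun y => I y - I0/S0*(1+y^2/ta^2)*S y) T).
            auto_derive. repeat split; eexists; eauto.
          - intros x hx. apply Rminus_diag_eq. apply A1; [lra|]. apply Hbelow; lra. }
        cbv beta in h. lra.
      + assert (h: (fun y => S y * P y - S0) T = 0).
        { assert (Tp: 0 < T) by (destruct (Rle_lt_or_eq_dec 0 T T0) as [Tp|Te]; [exact Tp| congruence]). refine (left_zero (fun y => S y * P y - S0) T Tp _ _).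
          - apply continuity_pt_filterlim. apply (ex_derive_continuous (K:=R_AbsRing) (V:=R_NormedModule) (fun y => S y * P y - S0) T).
            unfold P. auto_derive. repeat split; eexists; eauto.
          - intros x hx. apply Rminus_diag_eq. apply A2; [lra|]. apply Hbelow; lra. }
        cbv beta in h. lra. }
  destruct HTv as [HI HS].
  assert (pST: 0 < S T).
  { apply (Rmult_lt_reg_r (P T)); [apply hP|]. rewrite Rmult_0_l; lra. }
  assert (pIT: 0 < I T).
  { rewrite HI. specialize (hg T). repeat apply Rmult_lt_0_compat; try lra.
    apply Rinv_0_lt_compat; lra. }
  assert (goodT: good T).
  { intros x hx. destruct (Rlt_or_le x T) as [h|h].
    - apply (Hbelow x); lra.
    - replace x with T by lra. auto. }
  assert (TLt: T < t0).
  { destruct (Req_dec T t0) as [e|e]; [subst; contradiction| lra]. }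
  assert (cS: continuity_pt S T).
  { apply continuity_pt_filterlim. apply (ex_derive_continuous (K:=R_AbsRing) (V:=R_NormedModule)). eexists; eauto. }
  assert (cI: continuity_pt I T).
  { apply continuity_pt_filterlim. apply (ex_derive_continuous (K:=R_AbsRing) (V:=R_NormedModule)). eexists; eauto. }
  destruct (pos_near S T cS pST) as [d1 [hd1 H1]].
  destruct (pos_near I T cI pIT) as [d2 [hd2 H2]].
  set (d := Rmin d1 d2).
  assert (hd: 0 < d /\ d <= d1 /\ d <= d2) by (unfold d, Rmin; destruct (Rle_dec d1 d2); lra).
  set (s' := Rmin (T + d/2) t0).
  assert (hs': T < s' /\ s' <= t0 /\ s' <= T + d/2) by (unfold s', Rmin; destruct (Rle_dec (T + d/2) t0); lra).
  assert (Es s').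
  { split; [lra|]. intros x hx. destruct (Rle_dec x T) as [h|h].
    - apply goodT; lra.
    - split; [apply H1|apply H2]; rewrite Rabs_right; lra. }
  assert (s' <= T) by (apply HT1; auto). lra. }
pose proof (A1 t ht (B t ht)) as h1.
pose proof (A2 t ht (B t ht)) as h2.
unfold E. unfold P in h2.
replace (-alpha*t) with (-(alpha*t)) by ring. rewrite exp_Ropp. rewrite exp_Ropp in h2.
set (ea := exp (alpha * (S0 / (S0 + I0)) * (atan (k * t / ta) / (k / ta)))) in *.
set (eb := exp (alpha * t)) in *.
assert (0 < ea) by apply exp_pos. assert (0 < eb) by apply exp_pos.
specialize (hg t).
assert (hSt: S t = S0 * ((S0 + I0) / (S0 + I0 * (1 + t ^ 2 / ta ^ 2))) * (ea * / eb)).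
{ set (Q := (S0 + I0 * (1 + t ^ 2 / ta ^ 2)) / (S0 + I0) * / ea * eb) in h2.
  assert (hQ: 0 < Q).
  { unfold Q. repeat apply Rmult_lt_0_compat; try lra; try nra; apply Rinv_0_lt_compat; lra. }
  assert (hS': S t = S0 / Q) by (rewrite <- h2; field; lra).
  rewrite hS'. unfold Q.
  assert (ta^2+t^2>0) by (assert (0<ta^2) by (apply pow_lt; lra); nra).
  assert (h2': 0 < ta^2) by (apply pow_lt; lra).
  assert (h3: 0 < S0*ta^2 + I0*(ta^2+t^2)) by (assert (0 < S0*ta^2) by (apply Rmult_lt_0_compat; lra); assert (0 < I0*(ta^2+t^2)) by (apply Rmult_lt_0_compat; lra); lra).
  field. repeat split; lra. }
split; [exact hSt|]. rewrite h1, hSt.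
assert (ta^2+t^2>0) by (assert (0<ta^2) by (apply pow_lt; lra); nra).
assert (h2': 0 < ta^2) by (apply pow_lt; lra).
assert (h3: 0 < S0*ta^2 + I0*(ta^2+t^2)) by (assert (0 < S0*ta^2) by (apply Rmult_lt_0_compat; lra); assert (0 < I0*(ta^2+t^2)) by (apply Rmult_lt_0_compat; lra); lra).
field. repeat split; lra.
Qed.
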